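(* Let $W$ be a continuous real random variable with $\mathbb{E}[W]=0$, $\mathrm{Var}[W]=1$, cdf $F_W$ with a density $f_W$ defined (positive) on all of $\mathbb{R}$, inverse cdf $F_W^{-1}$ with $F_W^{-1}(0)=-\infty$, $F_W^{-1}(1)=+\infty$. Let $\mu_1,\mu_2\in\mathbb{R}$, $\sigma_1,\sigma_2>0$, not both $\mu_1=\mu_2$ and $\sigma_1=\sigma_2$, and define $h:(0,1)\to\mathbb{R}$ by $$h(u)=e^{\mu_1+\sigma_1F_W^{-1}(u)}-e^{\mu_2+\sigma_2F_W^{-1}(u)},$$ with $y^{\min}=\inf_{u\in(0,1)}h(u)$ and $y^{\max}=\sup_{u\in(0,1)}h(u)$. For $\sigma_1\ne\sigma_2$ let $$c^{\star}=F_W\!\left(\frac{\mu_2-\mu_1}{\sigma_1-\sigma_2}\right),\qquad u^{\star}=F_W\!\left(\frac{\log(\sigma_1/\sigma_2)+\mu_1-\mu_2}{\sigma_2-\sigma_1}\right),\qquad y^{\star}=h(u^{\star}).$$ Then: 1. If $\sigma_1=\sigma_2$ and $\mu_1>\mu_2$: $y^{\min}=0$, $y^{\max}=+\infty$, and $h$ is non-decreasing. 2. If $\sigma_1=\sigma_2$ and $\mu_2>\mu_1$: $y^{\min}=-\infty$, $y^{\max}=0$, and $h$ is non-increasing. 3. If $\sigma_1>\sigma_2$: $y^{\min}=y^{\star}<0$, $y^{\max}=+\infty$, and $h$ has a non-decreasing upper tail with threshold $c^{\star}$. 4. If $\sigma_1<\sigma_2$: $y^{\min}=-\infty$, $y^{\max}=y^{\star}>0$,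 and $h$ has a non-increasing upper tail with threshold $c^{\star}$.
   Context: For $f:(0,1)\to\mathbb{R}$: $f$ has a non-decreasing upper tail if there exists $x'\in(0,1)$ with $f(x)\le f(x')$ for all $x<x'$ and $f(x_1)\le f(x_2)$ for all $x'\le x_1\le x_2$; its threshold is the infimum of the set of all such $x'$. $f$ has a non-increasing upper tail if there exists $x'\in(0,1)$ with $f(x)\ge f(x')$ for all $x<x'$ and $f(x_1)\ge f(x_2)$ for all $x'\le x_1\le x_2$; its threshold is the infimum of the set of all such $x'$. (In the paper's setting, $h(U)$ with $U$ uniform on $[0,1]$ is the distribution of $R_1-R_2$ for comonotonic $R_i$ with $\log R_i=\mu_i+\sigma_iW$.) *)

(* Defs.v *)
From HB Require Import structures.
From mathcomp Require Import all_boot all_order all_algebra.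
From mathcomp Require Import all_classical all_reals all_analysis.
Set Implicit Arguments. Unset Strict Implicit. Unset Printing Implicit Defensive.
Import Order.TTheory GRing.Theory Num.Theory.
Local Open Scope classical_set_scope.
Local Open Scope ring_scope.

Section defs.
Variable R : realType.

Definition inv_cdf (F : R -> R) (u : R) : R := inf [set x : R | u <= F x].

Definition hfun (Finv : R -> R) (mu1 s1 mu2 s2 : R) (u : R) : R :=
  expR (mu1 + s1 * Finv u) - expR (mu2 + s2 * Finv u).

Definition ymin (h : R -> R) : \bar R :=
  ereal_inf [set (h u)%:E | u in `]0, 1[%classic].
Definition ymax (h : R -> R) : \bar R :=
  ereal_sup [set (h u)%:E | u in `]0, 1[%classic].

Definition nondec_tail_at (f : R -> R) (x' : R) : Prop :=
  0 < x' < 1 /\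
  (forall x, 0 < x -> x < x' -> f x <= f x') /\
  (forall x1 x2, x' <= x1 -> x1 <= x2 -> x2 < 1 -> f x1 <= f x2).

Definition noninc_tail_at (f : R -> R) (x' : R) : Prop :=
  0 < x' < 1 /\
  (forall x, 0 < x -> x < x' -> f x' <= f x) /\
  (forall x1 x2, x' <= x1 -> x1 <= x2 -> x2 < 1 -> f x2 <= f x1).

Definition has_nondec_upper_tail (f : R -> R) := exists x', nondec_tail_at f x'.
Definition has_noninc_upper_tail (f : R -> R) := exists x', noninc_tail_at f x'.

Definition nondec_tail_threshold (f : R -> R) : R := inf [set x' | nondec_tail_at f x'].
Definition noninc_tail_threshold (f : R -> R) : R := inf [set x' | noninc_tail_at f x'].

Definition nondecreasing_on01 (f : R -> R) :=
  forall u v, 0 < u -> u <= v -> v < 1 -> f u <= f v.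
Definition nonincreasing_on01 (f : R -> R) :=
  forall u v, 0 < u -> u <= v -> v < 1 -> f v <= f u.

End defs.

(* Main.v *)
Require Import Defs.
From HB Require Import structures.
From mathcomp Require Import all_boot all_order all_algebra.
From mathcomp Require Import all_classical all_reals all_analysis.
From mathcomp Require Import measurable_realfun.
From mathcomp Require Import ring lra.
Set Implicit Arguments. Unset Strict Implicit. Unset Printing Implicit Defensive.
Import Order.TTheory GRing.Theory Num.Theory.
Local Open Scope classical_set_scope.
Local Open Scope ring_scope.

Section G.
Variable R : realType.

Definition gg (m1 a1 m2 a2 t : R) : R := expR (m1 + a1 * t) - expR (m2 + a2 * t).
Definition dgg (m1 a1 m2 a2 t : R) : R := a1 * expR (m1 + a1 * t) - a2 * expR (m2 + a2 * t).

Lemma is_derive_lin (m a x : R) : is_derive x 1 (fun y => expR (m + a * y)) (a * expR (m + a * x)).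
Proof.
have h0 : is_derive x (1:R) (a \*: (@id R)) (a *: (1:R)) by apply: is_deriveZ; apply: is_derive_id.
have h1 : is_derive x (1:R) (cst m + a \*: (@id R)) (0 + a *: (1:R)) by apply: is_deriveD.
have e : (cst m + a \*: (@id R)) = (fun y => m + a * y) by apply/funext.
rewrite e add0r [_ *: _]mulr1 in h1.
have := @is_derive1_comp R expR (fun y => m + a * y) x _ _ (is_derive_expR _) h1.
by rewrite mulrC.
Qed.
Lemma is_derive_gg (m1 a1 m2 a2 x : R) : is_derive x 1 (gg m1 a1 m2 a2) (dgg m1 a1 m2 a2 x).
Proof. by apply: is_deriveB; apply: is_derive_lin. Qed.

Lemma gg_ndecr (m1 a1 m2 a2 x y : R) : x <= y ->
  (forall c, x < c < y -> 0 <= dgg m1 a1 m2 a2 c) -> gg m1 a1 m2 a2 x <= gg m1 a1 m2 a2 y.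
Proof.
rewrite le_eqVlt => /predU1P[-> //|xy] H.
rewrite -subr_ge0.
have [c cxy ->] : exists2 c, c \in `]x, y[ & gg m1 a1 m2 a2 y - gg m1 a1 m2 a2 x = dgg m1 a1 m2 a2 c * (y - x).
  apply: MVT => //; first by move=> c _; apply: is_derive_gg.
  apply: derivable_within_continuous => z _; exact: (@ex_derive _ _ _ _ _ _ _ (is_derive_gg m1 a1 m2 a2 z)).
apply: mulr_ge0; last by rewrite subr_ge0 ltW.
apply: H; by move: cxy; rewrite in_itv.
Qed.

Lemma gg_swap (m1 a1 m2 a2 t : R) : gg m2 a2 m1 a1 t = - gg m1 a1 m2 a2 t.
Proof. by rewrite /gg opprB. Qed.

Lemma dgg_swap (m1 a1 m2 a2 t : R) : dgg m2 a2 m1 a1 t = - dgg m1 a1 m2 a2 t.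
Proof. by rewrite /dgg opprB. Qed.

Lemma gg_nincr (m1 a1 m2 a2 x y : R) : x <= y ->
  (forall c, x < c < y -> dgg m1 a1 m2 a2 c <= 0) -> gg m1 a1 m2 a2 y <= gg m1 a1 m2 a2 x.
Proof.
move=> xy H; rewrite -lerN2 -!gg_swap; apply: gg_ndecr => // c /H; rewrite dgg_swap; lra.
Qed.

Lemma mul_expR (a m : R) : 0 < a -> a * expR m = expR (ln a + m).
Proof. by move=> a0; rewrite expRD lnK. Qed.

Lemma dgg_ge0 (m1 a1 m2 a2 c : R) : 0 < a1 -> 0 < a2 ->
  ln a2 + (m2 + a2 * c) <= ln a1 + (m1 + a1 * c) -> 0 <= dgg m1 a1 m2 a2 c.
Proof. by move=> a10 a20 H; rewrite /dgg !mul_expR// subr_ge0 ler_expR. Qed.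

Lemma dgg_le0 (m1 a1 m2 a2 c : R) : 0 < a1 -> 0 < a2 ->
  ln a1 + (m1 + a1 * c) <= ln a2 + (m2 + a2 * c) -> dgg m1 a1 m2 a2 c <= 0.
Proof. by move=> a10 a20 H; rewrite /dgg !mul_expR// subr_le0 ler_expR. Qed.

Lemma gg_lt0 (m1 a1 m2 a2 c : R) : m1 + a1 * c < m2 + a2 * c -> gg m1 a1 m2 a2 c < 0.
Proof. by move=> H; rewrite /gg subr_lt0 ltr_expR. Qed.

Lemma gg_ge0 (m1 a1 m2 a2 c : R) : m2 + a2 * c <= m1 + a1 * c -> 0 <= gg m1 a1 m2 a2 c.
Proof. by move=> H; rewrite /gg subr_ge0 ler_expR. Qed.

Section case3.
Variables (mu1 s1 mu2 s2 : R).
Hypotheses (s10 : 0 < s1) (s20 : 0 < s2) (s12 : s2 < s1).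
Local Notation g := (gg mu1 s1 mu2 s2).
Variables (k t0 ts : R).
Hypotheses (kE : k = ln s1 - ln s2) (k0 : 0 < k).
Hypotheses (e0 : (s1 - s2) * t0 = mu2 - mu1) (es : (s2 - s1) * ts = k + mu1 - mu2).
Ltac prep := have := s10; have := s20; have := s12; have := k0; have := e0; have := es; have := kE; intros.

Lemma c3_ts_t0 : ts < t0.
Proof.
rewrite ltNge; apply/negP => H; prep.
have h1 : 0 <= s1 - s2 by lra.
have h2 : 0 <= ts - t0 by lra.
have h3 := mulr_ge0 h1 h2.
have es' : (s1 - s2) * ts = - (k + mu1 - mu2) by rewrite -es; ring.
move: h3; rewrite mulrBr es' e0; lra.
Qed.

Lemma c3_up x y : ts <= x -> x <= y -> g x <= g y.
Proof.
move=> tx xy; apply: gg_ndecr => // c /andP[xc cy]; apply: dgg_ge0 => //.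
prep; nra.
Qed.

Lemma c3_down x y : x <= y -> y <= ts -> g y <= g x.
Proof.
move=> xy yt; apply: gg_nincr => // c /andP[xc cy]; apply: dgg_le0 => //.
prep; nra.
Qed.

Lemma c3_neg x : x < t0 -> g x < 0.
Proof. move=> xt; prep; apply: gg_lt0; nra. Qed.

Lemma c3_nonneg x : t0 <= x -> 0 <= g x.
Proof. move=> xt; prep; apply: gg_ge0; nra. Qed.

Lemma c3_t0 : g t0 = 0.
Proof.
prep; rewrite /gg; have -> : mu1 + s1 * t0 = mu2 + s2 * t0 by nra.
by rewrite subrr.
Qed.

Lemma c3_min x : g ts <= g x.
Proof.
case: (leP ts x) => tx; first exact: c3_up.
by apply: c3_down => //; apply: ltW.
Qed.

Lemma c3_gts : g ts < 0.
Proof. apply: c3_neg; exact: c3_ts_t0. Qed.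

Lemma c3_left (e B : R) : 0 < e -> exists2 t, t < B & - e < g t.
Proof.
move=> e0'; prep; exists (Num.min (B - 1) ((ln e - mu2) / s2 - 1)).
  by rewrite gt_min ltrBlDr ltrDl ltr01.
have Hm : mu2 + s2 * Num.min (B - 1) ((ln e - mu2) / s2 - 1) < ln e.
  have hm : Num.min (B - 1) ((ln e - mu2) / s2 - 1) <= (ln e - mu2) / s2 - 1.
    by rewrite ge_min lexx orbT.
  have hs : s2 * ((ln e - mu2) / s2) = ln e - mu2 by rewrite mulrC divfK// gt_eqF.
  nra.
have He : expR (mu2 + s2 * Num.min (B - 1) ((ln e - mu2) / s2 - 1)) < e.
  by rewrite -[X in _ < X]lnK ?posrE// ltr_expR.
have := expR_gt0 (mu1 + s1 * Num.min (B - 1) ((ln e - mu2) / s2 - 1)).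
rewrite /gg; lra.
Qed.

Lemma c3_unbounded (M : R) : exists t, M < g t.
Proof.
prep; pose t := Num.max ((1 + mu2 - mu1) / (s1 - s2)) ((M - mu2) / s2).
have h1 : (s1 - s2) * ((1 + mu2 - mu1) / (s1 - s2)) = 1 + mu2 - mu1.
  by rewrite mulrC divfK// subr_eq0 gt_eqF.
have h2 : s2 * ((M - mu2) / s2) = M - mu2 by rewrite mulrC divfK// gt_eqF.
have ht1 : (1 + mu2 - mu1) / (s1 - s2) <= t by rewrite le_max lexx.
have ht2 : (M - mu2) / s2 <= t by rewrite le_max lexx orbT.
exists t.
have L1 : 1 <= (mu1 + s1 * t) - (mu2 + s2 * t) by nra.
have L2 : M <= mu2 + s2 * t by nra.
rewrite /gg.
have -> : mu1 + s1 * t = (mu2 + s2 * t) + ((mu1 + s1 * t) - (mu2 + s2 * t)) by ring.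
rewrite expRD.
set A := expR (mu2 + s2 * t); set D := (mu1 + s1 * t) - (mu2 + s2 * t).
have hA : M < A by rewrite (le_lt_trans L2)// (lt_le_trans _ (expR_ge1Dx _))// ltrDr ltr01.
have hD : 2 <= expR D by rewrite (le_trans _ (expR_ge1Dx _))// -[2]/(1 + 1)%:R natrD lerD2l.
have A0 : 0 < A by exact: expR_gt0.
nra.
Qed.

End case3.


Section case1.
Variables (mu1 mu2 s : R).
Local Notation g := (gg mu1 s mu2 s).

Lemma c1_pos (t : R) : mu2 < mu1 -> 0 < g t.
Proof. by move=> h; rewrite /gg subr_gt0 ltr_expR ltrD2r. Qed.

Lemma c1_mono (x y : R) : 0 < s -> mu2 < mu1 -> x <= y -> g x <= g y.
Proof.
move=> s0 h xy; apply: gg_ndecr => // c _; rewrite /dgg -mulrBr.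
apply: mulr_ge0; first exact: ltW.
by rewrite subr_ge0 ler_expR lerD2r ltW.
Qed.

Lemma c1_small (e : R) : 0 < s -> 0 < e -> exists t, g t < e.
Proof.
move=> s0 e0; exists ((ln e - mu1) / s - 1).
have hs : s * ((ln e - mu1) / s) = ln e - mu1 by rewrite mulrC divfK// gt_eqF.
have H1 : mu1 + s * ((ln e - mu1) / s - 1) < ln e.
  rewrite mulrBr hs mulr1; have := s0; lra.
have He : expR (mu1 + s * ((ln e - mu1) / s - 1)) < e.
  by rewrite -[X in _ < X]lnK ?posrE// ltr_expR.
have := expR_gt0 (mu2 + s * ((ln e - mu1) / s - 1)).
rewrite /gg; lra.
Qed.

Lemma c1_unbounded (M : R) : 0 < s -> mu2 < mu1 -> exists t, M < g t.
Proof.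
move=> s0 h.
pose c := expR (mu1 - mu2) - 1.
have c0 : 0 < c by rewrite /c subr_gt0 expR_gt1 subr_gt0.
exists ((M / c - mu2) / s).
have hs : s * ((M / c - mu2) / s) = M / c - mu2 by rewrite mulrC divfK// gt_eqF.
set t := (M / c - mu2) / s.
rewrite /gg.
have -> : mu1 + s * t = (mu2 + s * t) + (mu1 - mu2) by ring.
rewrite expRD.
have hA : M / c < expR (mu2 + s * t).
  by rewrite (lt_le_trans _ (expR_ge1Dx _))// hs; lra.
have hc : expR (mu1 - mu2) = c + 1 by rewrite /c subrK.
rewrite hc mulrDr mulr1 addrK.
by rewrite -ltr_pdivrMr.
Qed.

End case1.

End G.
Section ereal_facts.
Variable R : realType.

Lemma sup_pinfty (S : set (\bar R)) : (forall M : R, exists2 y, S y & (M%:E < y)%E) ->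
  ereal_sup S = +oo%E.
Proof.
move=> H.
have H2 M : (M%:E < ereal_sup S)%E.
  have [y Sy My] := H M; exact: (lt_le_trans My (ereal_sup_ubound Sy)).
case E : (ereal_sup S) => [r| |] //.
  by have := H2 r; rewrite E ltxx.
by have := H2 0; rewrite E.
Qed.

Lemma ymin_opp (G : R -> R) : ymin (fun u => - G u) = (- ymax G)%E.
Proof.
rewrite /ymin /ymax /ereal_inf image_comp; congr (- ereal_sup _)%E.
by apply: eq_imagel => u _ /=; rewrite opprK.
Qed.

Lemma ymax_opp (G : R -> R) : ymax (fun u => - G u) = (- ymin G)%E.
Proof.
rewrite /ymin /ymax /ereal_inf image_comp oppeK; congr (ereal_sup _)%E.
Qed.

Lemma tail_opp (G : R -> R) x : noninc_tail_at G x <-> nondec_tail_at (fun u => - G u) x.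
Proof.
rewrite /noninc_tail_at /nondec_tail_at; split => -[h1 [h2 h3]]; split => //; split.
- by move=> y y0 yx; rewrite lerN2; apply: h2.
- by move=> x1 x2 a b c; rewrite lerN2; apply: h3.
- by move=> y y0 yx; rewrite -lerN2; apply: h2.
- by move=> x1 x2 a b c; rewrite -lerN2; apply: h3.
Qed.

End ereal_facts.

Section Abstract.
Variable R : realType.
Variables (F Finv : R -> R).
Hypothesis Finc : forall x y, x < y -> F x < F y.
Hypothesis F01 : forall x, 0 < F x < 1.
Hypothesis FinvF : forall t, Finv (F t) = t.
Hypothesis FFinv : forall u, 0 < u < 1 -> F (Finv u) = u.

Lemma Fle x y : x <= y -> F x <= F y.
Proof. by rewrite le_eqVlt => /predU1P[->//|/Finc/ltW]. Qed.

Lemma Finv_le u v : 0 < u -> u <= v -> v < 1 -> Finv u <= Finv v.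
Proof.
move=> u0 uv v1; rewrite leNgt; apply/negP => /Finc.
rewrite !FFinv ?u0 ?v1 ?(lt_le_trans u0 uv) ?(le_lt_trans uv v1)//.
by rewrite ltNge uv.
Qed.

Lemma Finv_lt u t : 0 < u < 1 -> u < F t -> Finv u < t.
Proof.
move=> u01 ut; rewrite ltNge; apply/negP => /Fle; rewrite FFinv//.
by rewrite leNgt ut.
Qed.

Lemma Finv_ge u t : 0 < u < 1 -> F t <= u -> t <= Finv u.
Proof.
move=> u01 ut; rewrite leNgt; apply/negP => /Finc; rewrite FFinv//.
by rewrite ltNge ut.
Qed.

Lemma img_Finv (G : R -> R) :
  [set (G (Finv u))%:E | u in `]0, 1[%classic] = range (fun t => (G t)%:E).
Proof.
apply/seteqP; split => y /=.
  by move=> [u _ <-]; exists (Finv u).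
move=> [t _ <-]; exists (F t); last by rewrite FinvF.
by rewrite /= in_itv /= F01.
Qed.

Lemma ymin_img (G : R -> R) :
  ymin (fun u => G (Finv u)) = ereal_inf (range (fun t => (G t)%:E)).
Proof. by rewrite /ymin img_Finv. Qed.

Lemma ymax_img (G : R -> R) :
  ymax (fun u => G (Finv u)) = ereal_sup (range (fun t => (G t)%:E)).
Proof. by rewrite /ymax img_Finv. Qed.


Lemma A_case1 mu1 mu2 s : 0 < s -> mu2 < mu1 ->
  ymin (hfun Finv mu1 s mu2 s) = 0%E /\ ymax (hfun Finv mu1 s mu2 s) = +oo%E /\
  nondecreasing_on01 (hfun Finv mu1 s mu2 s).
Proof.
move=> s0 h.
have hE : hfun Finv mu1 s mu2 s = fun u => gg mu1 s mu2 s (Finv u) by [].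
rewrite hE ymin_img ymax_img; split; [|split].
- apply/eqP; rewrite eq_le; apply/andP; split.
  + apply/lee_addgt0Pr => e e0; rewrite add0e.
    have [t gt] := c1_small mu1 mu2 s0 e0.
    apply: ge_ereal_inf; exists (gg mu1 s mu2 s t)%:E; first by exists t.
    by rewrite lee_fin ltW.
  + by apply/ereal_infP => _ [t _ <-]; rewrite lee_fin ltW // c1_pos.
- apply: sup_pinfty => M; have [t Mt] := c1_unbounded M s0 h.
  by exists (gg mu1 s mu2 s t)%:E; [exists t|rewrite lte_fin].
- move=> u v u0 uv v1; apply: c1_mono => //; exact: Finv_le.
Qed.

Lemma A_case3 mu1 s1 mu2 s2 : 0 < s1 -> 0 < s2 -> s2 < s1 ->
  let h := hfun Finv mu1 s1 mu2 s2 in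
  let cstar := F ((mu2 - mu1) / (s1 - s2)) in
  let ustar := F ((ln (s1 / s2) + mu1 - mu2) / (s2 - s1)) in
  ymin h = (h ustar)%:E /\ h ustar < 0 /\ ymax h = +oo%E /\
  has_nondec_upper_tail h /\ nondec_tail_threshold h = cstar.
Proof.
move=> s10 s20 s12 h cstar ustar.
pose k := ln (s1 / s2).
pose t0 := (mu2 - mu1) / (s1 - s2).
pose ts := (k + mu1 - mu2) / (s2 - s1).
have kE : k = ln s1 - ln s2 by rewrite /k lnM ?lnV // posrE ?invr_gt0.
have k0 : 0 < k by rewrite /k ln_gt0 // ltr_pdivlMr // mul1r.
have e0 : (s1 - s2) * t0 = mu2 - mu1 by rewrite /t0 mulrC divfK // subr_eq0 gt_eqF.
have es : (s2 - s1) * ts = k + mu1 - mu2 by rewrite /ts mulrC divfK // subr_eq0 lt_eqF.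
have hE : h = fun u => gg mu1 s1 mu2 s2 (Finv u) by [].
have hus : h ustar = gg mu1 s1 mu2 s2 ts by rewrite hE /ustar FinvF.
have cE : cstar = F t0 by [].
have hF t : h (F t) = gg mu1 s1 mu2 s2 t by rewrite hE /= FinvF.
have Hmin := c3_min s10 s20 s12 kE k0 e0 es.
have Hup := c3_up s10 s20 s12 kE k0 e0 es.
have Hneg := c3_neg s10 s20 s12 kE k0 e0 es.
have Ht0 := c3_t0 s10 s20 s12 kE k0 e0 es.
have Htst0 := c3_ts_t0 s10 s20 s12 kE k0 e0 es.
have Hleft := c3_left s10 s20 s12 kE k0 e0 es.
have tail : nondec_tail_at h (F t0).
  split; first exact: F01.
  split.
  - move=> x x0 xt; have x1 : x < 1 by rewrite (lt_trans xt)//; case/andP: (F01 t0).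
    rewrite hF Ht0 hE /=; apply/ltW/Hneg/Finv_lt => //; exact/andP.
  - move=> x1 x2 tx1 x12 x21.
    have x10 : 0 < x1 by rewrite (lt_le_trans _ tx1)//; case/andP: (F01 t0).
    have x11 : x1 < 1 by rewrite (le_lt_trans x12).
    rewrite hE /=; apply: Hup; last exact: Finv_le.
    apply: (le_trans (ltW Htst0)); apply: Finv_ge => //; exact/andP.
rewrite hus; split; [|split; [|split; [|split]]].
- rewrite hE ymin_img; apply/eqP; rewrite eq_le; apply/andP; split.
    by apply: ge_ereal_inf; exists (gg mu1 s1 mu2 s2 ts)%:E; first by exists ts.
  by apply/ereal_infP => _ [t _ <-]; rewrite lee_fin.
- exact: (c3_gts s10 s20 s12 kE k0 e0 es).
- rewrite hE ymax_img; apply: sup_pinfty => M.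
  have [t Mt] := c3_unbounded s10 s20 s12 kE k0 e0 es M.
  by exists (gg mu1 s1 mu2 s2 t)%:E; [exists t|rewrite lte_fin].
- by exists (F t0).
have lb : forall x', nondec_tail_at h x' -> F t0 <= x'.
  move=> x' [/andP[x'0 x'1] [h2 h3]]; rewrite leNgt; apply/negP => xt.
  have t'lt : Finv x' < t0 by apply: Finv_lt => //; rewrite x'0.
  have gneg := Hneg _ t'lt.
  have gpos : 0 < - gg mu1 s1 mu2 s2 (Finv x') by rewrite oppr_gt0.
  have [t tt' gt] := Hleft (- gg mu1 s1 mu2 s2 (Finv x')) (Finv x') gpos.
  have Ft0 : 0 < F t by case/andP: (F01 t).
  have Ftx : F t < x' by rewrite -(FFinv (u:=x')) ?x'0 ?x'1 //; exact: Finc.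
  have := h2 _ Ft0 Ftx; rewrite hF hE /=; rewrite opprK in gt.
  by rewrite leNgt gt.
rewrite cE /nondec_tail_threshold; apply/eqP; rewrite eq_le; apply/andP; split.
  apply: ge_inf => //; exists 0 => x' [/andP[x'0 _] _]; exact: ltW.
by apply: lb_le_inf; [exists (F t0)|move=> x' /lb].
Qed.

Lemma A_main mu1 mu2 s1 s2 : 0 < s1 -> 0 < s2 ->
  let h := hfun Finv mu1 s1 mu2 s2 in
  let cstar := F ((mu2 - mu1) / (s1 - s2)) in
  let ustar := F ((ln (s1 / s2) + mu1 - mu2) / (s2 - s1)) in
  let ystar := h ustar in
  (s1 = s2 -> mu1 > mu2 ->
     ymin h = 0%E /\ ymax h = +oo%E /\ nondecreasing_on01 h) /\
  (s1 = s2 -> mu2 > mu1 ->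
     ymin h = -oo%E /\ ymax h = 0%E /\ nonincreasing_on01 h) /\
  (s1 > s2 ->
     ymin h = ystar%:E /\ ystar < 0 /\ ymax h = +oo%E /\
     has_nondec_upper_tail h /\ nondec_tail_threshold h = cstar) /\
  (s1 < s2 ->
     ymin h = -oo%E /\ ymax h = ystar%:E /\ ystar > 0 /\
     has_noninc_upper_tail h /\ noninc_tail_threshold h = cstar).
Proof.
move=> s10 s20 h cstar ustar ystar.
have hN' : hfun Finv mu2 s2 mu1 s1 = fun u => - h u.
  by apply/funext => u; rewrite /h /hfun opprB.
have hN : h = fun u => - hfun Finv mu2 s2 mu1 s1 u.
  by rewrite hN'; apply/funext => u; rewrite opprK.
split; [|split; [|split]].
- by move=> e m; rewrite /h -e; exact: A_case1.
- move=> e m; rewrite hN ymin_opp ymax_opp -e.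
  have [H1 [H2 H3]] := A_case1 (mu1:=mu2) (mu2:=mu1) s10 m.
  rewrite H1 H2 /=; split => //; split; first by rewrite oppr0.
  by move=> u v u0 uv v1; rewrite lerN2; apply: H3.
- by move=> s12; exact: A_case3.
- move=> s12.
  have := A_case3 (s1:=s2) (s2:=s1) mu2 mu1 s20 s10 s12.
  move=> /= [H1 [H2 [H3 [H4 H5]]]].
  have us : F ((ln (s2 / s1) + mu2 - mu1) / (s1 - s2)) = ustar.
    rewrite /ustar; congr F.
    have -> : s2 / s1 = (s1 / s2)^-1 by rewrite invf_div.
    rewrite lnV ?posrE ?divr_gt0 //.
    have -> : s1 - s2 = - (s2 - s1) by rewrite opprB.
    by rewrite invrN mulrN -mulNr; congr (_ * _); ring.
  have cs : F ((mu1 - mu2) / (s2 - s1)) = cstar.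
    rewrite /cstar; congr F.
    have -> : s2 - s1 = - (s1 - s2) by rewrite opprB.
    by rewrite invrN mulrN -mulNr opprB.
  rewrite us cs hN' in H1 H2 H3 H4 H5.
  have Ymin : ymin h = -oo%E.
    by rewrite hN (ymin_opp (hfun Finv mu2 s2 mu1 s1)) hN' H3.
  have Ymax : ymax h = (- (- h ustar))%:E.
    by rewrite {1}hN (ymax_opp (hfun Finv mu2 s2 mu1 s1)) hN' H1 EFinN.
  rewrite Ymin Ymax.
  have yE : ystar = - (- h ustar) by rewrite opprK.
  split => //; split; first by rewrite yE.
  split; first by rewrite yE oppr_gt0.
  split.
    by case: H4 => x Hx; exists x; apply/(tail_opp h x).
  rewrite /noninc_tail_threshold -H5 /nondec_tail_threshold; congr inf.
  by apply/seteqP; split => x /= /(tail_opp h x).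
Qed.

End Abstract.



Lemma mfE0 (R : realType) (f : R -> R) (mf : measurable_fun setT f) (A : set R) :
  measurable_fun A (EFin \o f).
Proof. by apply/measurable_EFinP; exact: measurable_funTS. Qed.

Section Prob.
Variable R : realType.
Variables (d : measure_display) (T : measurableType d) (P : probability T R).
Variables (W : {RV P >-> R}) (f : R -> R).
Hypothesis mf : measurable_fun setT f.
Hypothesis fpos : forall x, 0 < f x.
Hypothesis hcdf : forall x,
  cdf W x = (\int[lebesgue_measure]_(y in `]-oo, x]) (f y)%:E)%E.

Let F := fun x => fine (cdf W x).

Lemma cdfE x : cdf W x = (F x)%:E.
Proof.
rewrite /F fineK // ge0_fin_numE ?cdf_ge0 //.
exact: (le_lt_trans (cdf_le1 W x) (ltry 1)).
Qed.


Lemma int_pos x y : x < y ->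
  (0 < \int[lebesgue_measure]_(z in `]x, y]) (f z)%:E)%E.
Proof.
move=> xy; rewrite lt_neqAle integral_ge0 ?andbT; last first.
  by move=> z _; rewrite lee_fin ltW.
apply/negP => /eqP H.
have Habs : (\int[lebesgue_measure]_(z in `]x, y]) `|(f z)%:E| = 0)%E.
  transitivity (\int[lebesgue_measure]_(z in `]x, y]) (f z)%:E)%E; last by rewrite H.
  by apply: eq_integral => z _; rewrite gee0_abs // lee_fin ltW.
have mI : measurable (`]x, y]%classic : set R) by exact: measurable_itv.
have := (ae_eq_integral_abs lebesgue_measure mI (@mfE0 _ _ mf _)).1 Habs.
case=> N [mN N0 sub].
have : (lebesgue_measure (`]x, y] : set R) <= lebesgue_measure N)%E.
  apply: le_measure; rewrite ?inE //.
  move=> z zxy; apply: sub => /= H'; have := H' zxy => /= /eqP.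
  by rewrite eqe gt_eqF.
rewrite N0 lebesgue_measure_itv /= lte_fin xy -EFinD lee_fin.
by rewrite leNgt subr_gt0 xy.
Qed.

Lemma cdf_split x y : x < y ->
  cdf W y = (cdf W x + \int[lebesgue_measure]_(z in `]x, y]) (f z)%:E)%E.
Proof.
move=> xy; rewrite !hcdf.
rewrite (@itv_bndbnd_setU _ _ _ (BRight x)) //; last by rewrite bnd_simp ltW.
rewrite ge0_integral_setU //.
- exact: (@mfE0 _ _ mf _).
- by move=> z _; rewrite lee_fin ltW.
- apply/disj_set2P; rewrite -subset0 => z [] /=; rewrite !in_itv /= => zx /andP[xz _].
  by move: (lt_le_trans xz zx); rewrite ltxx.
Qed.

Lemma Finc x y : x < y -> F x < F y.
Proof.
move=> xy; rewrite -lte_fin -!cdfE (cdf_split xy) cdfE lteDl //.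
exact: int_pos.
Qed.

Lemma F01 x : 0 < F x < 1.
Proof.
apply/andP; split.
  have h1 : x - 1 < x by rewrite ltrBlDr ltrDl.
  apply: (le_lt_trans _ (Finc h1)).
  by rewrite /F fine_ge0 // cdf_ge0.
apply: (lt_le_trans (Finc (_ : x < x + 1))); first by rewrite ltrDl.
by rewrite -lee_fin -cdfE cdf_le1.
Qed.

Lemma exists_above u : u < 1 -> exists x, u < F x.
Proof.
move=> u1.
have sup1 : ereal_sup (range (cdf W)) = 1%E.
  exact: (cvg_unique _ (nondecreasing_cvge (cdf_nondecreasing W)) (cvg_cdfy1 W)).
have : (u%:E < ereal_sup (range (cdf W)))%E by rewrite sup1 lte_fin.
by case/ereal_sup_gt => _ [x _ <-]; rewrite cdfE lte_fin => ?; exists x.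
Qed.

Lemma exists_below u : 0 < u -> exists x, F x < u.
Proof.
move=> u0.
have noninc : nonincreasing_fun (cdf W \o -%R).
  by move=> q r; rewrite -lerN2; exact: cdf_nondecreasing.
have H2 : (cdf W \o -%R) x @[x --> +oo] --> 0%E.
  by rewrite -cvgNy_compNP; exact: cvg_cdfNy0.
have inf0 : ereal_inf (range (cdf W \o -%R)) = 0%E.
  exact: (cvg_unique _ (nonincreasing_cvge noninc) H2).
have : (ereal_inf (range (cdf W \o -%R)) < u%:E)%E by rewrite inf0 lte_fin.
by case/ereal_inf_lt => _ [x _ <-]; rewrite /= cdfE lte_fin => ?; exists (- x).
Qed.

Lemma RC t u : F t < u -> exists2 e, 0 < e & F (t + e) < u.
Proof.
move=> tu.
have H : cdf W x @[x --> t^'+] --> (F t)%:E.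
  by rewrite -cdfE; exact: cdf_right_continuous.
move/fine_cvgP : H => [_ H].
have H3 := cvgr_lt _ H u tu.
near (t^'+) => x.
exists (x - t); first by rewrite subr_gt0; near: x; exact: nbhs_right_gt.
rewrite addrC subrK; near: x; exact: H3.
Unshelve. all: by end_near. Qed.

Lemma LC t u : u < F t -> exists2 e, 0 < e & u < F (t - e).
Proof.
move=> ut.
pose A n : set R := [set` Interval -oo%O (BRight (t - n.+1%:R^-1))].
have ndA : nondecreasing_seq A.
  move=> n m nm; apply/subsetPset; apply: subset_itvl.
  by rewrite bnd_simp lerD2l lerN2 lef_pV2 ?posrE // ler_nat.
have mA n : measurable (A n) by exact: measurable_itv.
have H : (\int[lebesgue_measure]_(x in A n) (f x)%:E)%E @[n --> \oo] -->
    (\int[lebesgue_measure]_(x in \bigcup_n A n) (f x)%:E)%E.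
  apply: ge0_nondecreasing_set_cvg_integral => //.
  - move=> n; exact: (@mfE0 _ _ mf _).
  - by move=> n x _; rewrite lee_fin ltW.
have UA : \bigcup_n A n = `]-oo, t[%classic.
  apply/seteqP; split => z /=.
    move=> [n _]; rewrite /A /= !in_itv /= => zt.
    by rewrite (le_lt_trans zt) // ltrBlDr ltrDl.
  rewrite in_itv /= => zt; have [k zkt] := ltr_add_invr zt.
  by exists k => //; rewrite /A /= in_itv /= lerBrDr ltW.
rewrite UA integral_itv_bndo_bndc -?hcdf in H; last exact: (@mfE0 _ _ mf _).
have HA n : (\int[lebesgue_measure]_(x in A n) (f x)%:E)%E = cdf W (t - n.+1%:R^-1).
  by rewrite hcdf.
have ndS : nondecreasing_seq (fun n => \int[lebesgue_measure]_(x in A n) (f x)%:E)%E.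
  apply: ge0_nondecreasing_set_nondecreasing_integral => //.
  - move=> n; exact: (@mfE0 _ _ mf _).
  - by move=> n x _; rewrite lee_fin ltW.
have supE : cdf W t = ereal_sup (range (fun n => (\int[lebesgue_measure]_(x in A n) (f x)%:E)%E)).
  exact: (cvg_unique _ H (ereal_nondecreasing_cvgn ndS)).
have : (u%:E < ereal_sup (range (fun n => (\int[lebesgue_measure]_(x in A n) (f x)%:E)%E)))%E.
  by rewrite -supE cdfE lte_fin.
case/ereal_sup_gt => _ [n _ <-]; rewrite HA cdfE lte_fin => un.
by exists n.+1%:R^-1.
Qed.

Let Finv := inv_cdf F.

Lemma FinvF t : Finv (F t) = t.
Proof.
rewrite /Finv /inv_cdf.
have lb : lbound [set x | F t <= F x] t.
  move=> x /= tx; rewrite leNgt; apply/negP => /Finc; by rewrite ltNge tx.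
apply/eqP; rewrite eq_le; apply/andP; split.
  by apply: (ge_inf (ex_intro _ t lb)) => /=.
by apply: lb_le_inf => //; exists t => /=.
Qed.

Lemma FFinv u : 0 < u < 1 -> F (Finv u) = u.
Proof.
case/andP => u0 u1; rewrite /Finv /inv_cdf.
set S := [set x | u <= F x].
have [y Fy] := exists_below u0.
have lb : lbound S y.
  move=> x /= ux; rewrite leNgt; apply/negP => /Finc xy.
  by move: (lt_trans (le_lt_trans ux xy) Fy); rewrite ltxx.
have [z Fz] := exists_above u1.
have Sz : S z by rewrite /S /= ltW.
have hlb : has_lbound S by exists y.
apply/eqP; rewrite eq_le; apply/andP; split.
  rewrite leNgt; apply/negP => /LC [e e0 ue].
  have : S (inf S - e) by rewrite /S /= ltW.
  move/(ge_inf hlb); rewrite lerBrDr gerDl leNgt e0 //.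
rewrite leNgt; apply/negP => /RC [e e0 Fe].
have ie : inf S < inf S + e by rewrite ltrDl.
have [x Sx xe] := inf_lt (ex_intro _ z Sz) ie.
have := le_trans Sx (ltW (Finc xe)); rewrite leNgt.
by rewrite (lt_le_trans Fe) // lexx.
Qed.

End Prob.

Theorem proposition6p1 (R : realType) (d : measure_display) (T : measurableType d)
  (P : probability T R) (W : {RV P >-> R}) (f : R -> R)
  (mu1 mu2 s1 s2 : R) :
  ('E_P[W] = 0)%E ->
  ('V_P[W] = 1)%E ->
  measurable_fun setT f ->
  (forall x, 0 < f x) ->
  (forall x, cdf W x = (\int[lebesgue_measure]_(y in `]-oo, x]) (f y)%:E)%E) ->
  0 < s1 -> 0 < s2 ->
  ~ (mu1 = mu2 /\ s1 = s2) ->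
  let F := fun x => fine (cdf W x) in
  let Finv := inv_cdf F in
  let h := hfun Finv mu1 s1 mu2 s2 in
  let cstar := F ((mu2 - mu1) / (s1 - s2)) in
  let ustar := F ((ln (s1 / s2) + mu1 - mu2) / (s2 - s1)) in
  let ystar := h ustar in
  (s1 = s2 -> mu1 > mu2 ->
     ymin h = 0%E /\ ymax h = +oo%E /\ nondecreasing_on01 h) /\
  (s1 = s2 -> mu2 > mu1 ->
     ymin h = -oo%E /\ ymax h = 0%E /\ nonincreasing_on01 h) /\
  (s1 > s2 ->
     ymin h = ystar%:E /\ ystar < 0 /\ ymax h = +oo%E /\
     has_nondec_upper_tail h /\ nondec_tail_threshold h = cstar) /\
  (s1 < s2 ->
     ymin h = -oo%E /\ ymax h = ystar%:E /\ ystar > 0 /\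
     has_noninc_upper_tail h /\ noninc_tail_threshold h = cstar).
Proof.
move=> _ _ mf fpos hcdf s10 s20 _.
exact: (A_main (Finc mf fpos hcdf) (F01 mf fpos hcdf) (FinvF mf fpos hcdf)
  (FFinv mf fpos hcdf) mu1 mu2 s10 s20).
Qed.
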